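(* Let $1\to N\xrightarrow{i}G\xrightarrow{p}\Gamma\to1$ be a short exact sequence of groups. Then \[\dim_{\mathbb{R}}\mathrm{W}(G,N)=\dim_{\mathbb{R}}\mathrm{Im}(\mathbf d\circ\tau_{/b})+\dim_{\mathbb{R}}\Big(\frac{\mathrm{Im}\,c_G^2\cap\mathrm{Im}\,p^*}{\mathrm{Im}(p^*\circ c_\Gamma^2)}\Big).\] In particular, $\dim_{\mathbb{R}}\mathrm{W}(G,N)\le\dim_{\mathbb{R}}\mathrm{Ker}\,c_\Gamma^3+\dim_{\mathbb{R}}\mathrm{H}^2(G)$.
   Context: All cohomology has trivial real coefficients. For a group $H$, $\mathrm{C}^n(H)$ is the space of real functions on $H^n$ with the standard inhomogeneous coboundary $\delta$ (e.g. $\delta\phi(h_1,h_2)=\phi(h_2)-\phi(h_1h_2)+\phi(h_1)$ for $\phi\in\mathrm{C}^1(H)$), $\mathrm{C}_b^n(H)$ the bounded functions, $\mathrm{H}^n$, $\mathrm{H}^n_b$ the cohomologies, $c_H^n\colon\mathrm{H}^n_b(H)\to\mathrm{H}^n(H)$ the comparison map. $\mathrm{C}^*_{/b}(H)=\mathrm{C}^*(H)/\mathrm{C}^*_b(H)$ with cohomology $\mathrm{H}^*_{/b}(H)$; $j$ denotes the quotient $\mathrm{C}^*(H)\to\mathrm{C}^*_{/b}(H)$, and $\mathbf d\colon\mathrm{H}^2_{/b}(\Gamma)\to\mathrm{H}^3_b(\Gamma)$ is the connecting map of $0\to\mathrm{C}_b^*\to\mathrm{C}^*\to\mathrm{C}^*_{/b}\to0$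 (induced by $\delta$). $p^*\colon\mathrm{H}^2(\Gamma)\to\mathrm{H}^2(G)$. $\mathrm{Q}(H)$: homogeneous quasimorphisms on $H$; $\mathrm{Q}(N)^G$: those on $N$ invariant under conjugation by $G$; $\mathrm{H}^1(N)^G$: $G$-invariant homomorphisms $N\to\mathbb{R}$; $i^*\colon\mathrm{Q}(G)\to\mathrm{Q}(N)^G$ is restriction. $\mathrm{W}(G,N)=\mathrm{Q}(N)^G/(\mathrm{H}^1(N)^G+i^*\mathrm{Q}(G))$. The map $\tau_{/b}\colon\mathrm{Q}(N)^G\to\mathrm{H}^2_{/b}(\Gamma)$: choose a set-theoretic section $s\colon\Gamma\to G$ of $p$ with $s(1)=1$, put $\mu_s(g)=\mu(g\cdot(s(p(g)))^{-1})$, and $\tau_{/b}(\mu)=[j(s^*\delta\mu_s)]$ where $(s^*\delta\mu_s)(\gamma_1,\gamma_2)=\delta\mu_s(s(\gamma_1),s(\gamma_2))$ (independent of $s$). *)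

(* Defs.v *)
From HB Require Import structures.
From mathcomp Require Import all_boot all_order all_algebra.
From mathcomp Require Import boolp classical_sets functions reals constructive_ereal ereal.
From mathcomp Require Import Rstruct.

Set Implicit Arguments.
Unset Strict Implicit.
Unset Printing Implicit Defensive.

Import Order.TTheory GRing.Theory Num.Theory.
Local Open Scope ring_scope.
Local Open Scope classical_set_scope.

Notation RR := Rdefinitions.R.

(* Real cochains (trivial real coefficients), inhomogeneous, degrees 1..4.
   C^n(H) = real functions on H^n; we use curried functions with values
   in RR^o so that they carry their natural real vector space structure. *)
Definition C1 (H : groupType) := H -> RR^o.
Definition C2 (H : groupType) := H -> H -> RR^o.
Definition C3 (H : groupType) := H -> H -> H -> RR^o.
Definition C4 (H : groupType) := H -> H -> H -> H -> RR^o.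

Definition delta1 (H : groupType) (f : C1 H) : C2 H :=
  fun h1 h2 => f h2 - f (h1 * h2)%g + f h1.
Definition delta2 (H : groupType) (f : C2 H) : C3 H :=
  fun h1 h2 h3 => f h2 h3 - f (h1 * h2)%g h3 + f h1 (h2 * h3)%g - f h1 h2.
Definition delta3 (H : groupType) (f : C3 H) : C4 H :=
  fun h1 h2 h3 h4 => f h2 h3 h4 - f (h1 * h2)%g h3 h4 + f h1 (h2 * h3)%g h4
                     - f h1 h2 (h3 * h4)%g + f h1 h2 h3.

Definition bounded1 (H : groupType) (f : C1 H) : Prop :=
  exists M : RR, forall h, `|f h| <= M.
Definition bounded2 (H : groupType) (f : C2 H) : Prop :=
  exists M : RR, forall h1 h2, `|f h1 h2| <= M.
Definition bounded3 (H : groupType) (f : C3 H) : Prop :=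
  exists M : RR, forall h1 h2 h3, `|f h1 h2 h3| <= M.

Definition Z2 (H : groupType) : set (C2 H) := [set z | delta2 z = 0].
Definition B2 (H : groupType) : set (C2 H) := [set delta1 f | f in [set: C1 H]].
Definition Zb2 (H : groupType) : set (C2 H) := [set z | bounded2 z /\ delta2 z = 0].
Definition Zb3 (H : groupType) : set (C3 H) := [set z | bounded3 z /\ delta3 z = 0].
Definition Bb3 (H : groupType) : set (C3 H) := [set delta2 f | f in bounded2 (H:=H)].
Definition B3 (H : groupType) : set (C3 H) := [set delta2 f | f in [set: C2 H]].

Definition sumset (V : zmodType) (A B : set V) : set V :=
  [set v | exists a b, A a /\ B b /\ v = a + b].

(* For subspaces A, B of a real vector space V,
   [qdim A B] is the dimension of the image of A in V / B, i.e. of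
   (A + B) / B, as an extended real (a natural number or +oo):
   the supremum of the k such that there are k vectors of A that are
   linearly independent modulo B. *)
Definition qdim_ge (V : lmodType RR) (A B : set V) (k : nat) : Prop :=
  exists v : 'I_k -> V, (forall j, A (v j)) /\
    forall c : 'I_k -> RR, B (\sum_(j < k) c j *: v j) -> forall j, c j = 0.

Definition qdim (V : lmodType RR) (A B : set V) : \bar RR :=
  ereal_sup [set (k%:R)%:E | k in qdim_ge A B].

Definition group_hom (H K : groupType) (f : H -> K) : Prop :=
  forall x y, f (x * y)%g = (f x * f y)%g.

Definition short_exact (N G Gam : groupType) (i : N -> G) (p : G -> Gam) : Prop :=
  [/\ group_hom i, group_hom p, injective i, (forall y, exists x, p x = y) &
      forall g, p g = 1%g <-> exists n, i n = g].

Definition quasimorphism (H : groupType) (f : C1 H) : Prop := bounded2 (delta1 f).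
Definition homogeneous (H : groupType) (f : C1 H) : Prop :=
  forall (h : H) (n : nat), f (h ^+ n)%g = n%:R * f h.
Definition Q (H : groupType) : set (C1 H) :=
  [set f | quasimorphism f /\ homogeneous f].

Definition Hom1 (H : groupType) : set (C1 H) :=
  [set f | forall x y, f (x * y)%g = f x + f y].

Definition G_invariant (N G : groupType) (i : N -> G) (f : C1 N) : Prop :=
  forall (g : G) (n n' : N), i n' = (g * i n * g^-1)%g -> f n' = f n.

Definition QNG (N G : groupType) (i : N -> G) : set (C1 N) :=
  [set f | Q f /\ G_invariant i f].
Definition H1NG (N G : groupType) (i : N -> G) : set (C1 N) :=
  [set f | Hom1 f /\ G_invariant i f].
Definition restrQ (N G : groupType) (i : N -> G) : set (C1 N) :=
  [set (fun n => mu (i n)) | mu in @Q G].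

Definition dimW (N G : groupType) (i : N -> G) : \bar RR :=
  qdim (QNG i) (sumset (H1NG i) (restrQ i)).

(* the (unique, if i is injective) preimage under i, with default 1 *)
Definition ipre (N G : groupType) (i : N -> G) (x : G) : N :=
  xget 1%g [set n | i n = x].

Definition mu_s (N G Gam : groupType) (i : N -> G) (p : G -> Gam) (s : Gam -> G)
  (mu : C1 N) : C1 G := fun g => mu (ipre i (g * (s (p g))^-1)%g).

(* s^* delta mu_s, a representative of tau_{/b}(mu) in C^2(Gamma) *)
Definition tau_rep (N G Gam : groupType) (i : N -> G) (p : G -> Gam) (s : Gam -> G)
  (mu : C1 N) : C2 Gam := fun g1 g2 => delta1 (mu_s i p s mu) (s g1) (s g2).

(* connecting map d: lift to C^2 and apply delta; d(tau_{/b}(mu)) is the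
   class in H^3_b(Gamma) of delta (s^* delta mu_s) *)
Definition dtau_rep (N G Gam : groupType) (i : N -> G) (p : G -> Gam) (s : Gam -> G)
  (mu : C1 N) : C3 Gam := delta2 (tau_rep i p s mu).

(* dim Im(d o tau_{/b}) inside H^3_b(Gamma) = Z^3_b / delta C^2_b *)
Definition dim_im_dtau (N G Gam : groupType) (i : N -> G) (p : G -> Gam)
  (s : Gam -> G) : \bar RR :=
  qdim [set dtau_rep i p s mu | mu in QNG i] (@Bb3 Gam).

Definition pull2 (G Gam : groupType) (p : G -> Gam) (z : C2 Gam) : C2 G :=
  fun g1 g2 => z (p g1) (p g2).

(* Im c_G^2, Im p^*, Im (p^* o c_Gamma^2) as subspaces of H^2(G), described
   by the sets of cocycles representing their classes *)
Definition im_cG (G : groupType) : set (C2 G) := sumset (@Zb2 G) (@B2 G).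
Definition im_pstar (G Gam : groupType) (p : G -> Gam) : set (C2 G) :=
  sumset [set pull2 p z | z in @Z2 Gam] (@B2 G).
Definition im_pstar_c (G Gam : groupType) (p : G -> Gam) : set (C2 G) :=
  sumset [set pull2 p z | z in @Zb2 Gam] (@B2 G).

Definition dim_second (G Gam : groupType) (p : G -> Gam) : \bar RR :=
  qdim (@im_cG G `&` im_pstar p) (im_pstar_c p).

(* Ker c_Gamma^3 in H^3_b(Gamma): bounded 3-cocycles that are coboundaries of
   (arbitrary) 2-cochains, modulo delta C^2_b *)
Definition dim_ker_c3 (Gam : groupType) : \bar RR := qdim (@Zb3 Gam `&` @B3 Gam) (@Bb3 Gam).

Definition dim_H2 (G : groupType) : \bar RR := qdim (@Z2 G) (@B2 G).

(* Main.v *)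
Require Import Defs.
From HB Require Import structures.
From mathcomp Require Import all_boot all_order all_algebra.
From mathcomp Require Import boolp classical_sets functions reals constructive_ereal ereal.
From mathcomp Require Import Rstruct.
From mathcomp Require Import ring lra.
Set Implicit Arguments.
Unset Strict Implicit.
Unset Printing Implicit Defensive.
Import Order.TTheory GRing.Theory Num.Theory.
Local Open Scope ring_scope.
Local Open Scope classical_set_scope.

Section LinAlg.
Variable V : lmodType RR.

Definition subsp (S : set V) := S 0 /\ forall (a : RR) x y, S x -> S y -> S (a *: x + y).

Lemma subspD S x y : subsp S -> S x -> S y -> S (x + y).
Proof. by move=> [_ H] Sx Sy; have := H 1 x y Sx Sy; rewrite scale1r. Qed.
Lemma subspZ S a x : subsp S -> S x -> S (a *: x).
Proof. by move=> [S0 H] Sx; have := H a x 0 Sx S0; rewrite addr0. Qed.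
Lemma subspN S x : subsp S -> S x -> S (- x).
Proof. by move=> sS Sx; rewrite -scaleN1r; apply: subspZ. Qed.
Lemma subspB S x y : subsp S -> S x -> S y -> S (x - y).
Proof. by move=> sS Sx Sy; apply: subspD => //; apply: subspN. Qed.
Lemma subsp_sum S k (c : 'I_k -> RR) (v : 'I_k -> V) :
  subsp S -> (forall j, S (v j)) -> S (\sum_(j < k) c j *: v j).
Proof.
move=> sS Sv; apply: (big_ind S); first exact: sS.1.
  by move=> x y; apply: subspD.
by move=> j _; apply: subspZ.
Qed.

Lemma subspI S T : subsp S -> subsp T -> subsp (S `&` T).
Proof.
move=> [S0 HS] [T0 HT]; split => // a x y [Sx Tx] [Sy Ty]; split; auto.
Qed.

Lemma subsp_sumset S T : subsp S -> subsp T -> subsp (sumset S T).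
Proof.
move=> sS sT; split; first by exists 0, 0; rewrite addr0; split; [exact: sS.1|split; [exact: sT.1|]].
move=> a x y [x1 [x2 [Sx1 [Tx2 ->]]]] [y1 [y2 [Sy1 [Ty2 ->]]]].
exists (a *: x1 + y1), (a *: x2 + y2); split; first by apply: sS.2.
split; first by apply: sT.2.
by rewrite scalerDr; rewrite addrACA.
Qed.

Lemma sumsetl S T x : subsp T -> S x -> sumset S T x.
Proof. by move=> sT Sx; exists x, 0; rewrite addr0; split => //; split => //; exact: sT.1. Qed.
Lemma sumsetr S T x : subsp S -> T x -> sumset S T x.
Proof. by move=> sS Tx; exists 0, x; rewrite add0r; split => //; exact: sS.1. Qed.

End LinAlg.

Definition linr (V W : lmodType RR) (L : V -> W) :=
  forall a x y, L (a *: x + y) = a *: L x + L y.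

Section Lin.
Variables (V W : lmodType RR) (L : V -> W).
Hypothesis hL : linr L.
Lemma linr0 : L 0 = 0.
Proof.
have := hL 1 0 0; rewrite scaler0 addr0 scale1r => h.
by apply: (addrI (L 0)); rewrite addr0 -h.
Qed.
Lemma linrD x y : L (x + y) = L x + L y.
Proof. by have := hL 1 x y; rewrite !scale1r. Qed.
Lemma linrZ a x : L (a *: x) = a *: L x.
Proof. by have := hL a x 0; rewrite !addr0 linr0 addr0. Qed.
Lemma linrN x : L (- x) = - L x.
Proof. by rewrite -scaleN1r linrZ scaleN1r. Qed.
Lemma linrB x y : L (x - y) = L x - L y.
Proof. by rewrite linrD linrN. Qed.
Lemma linr_sum k (c : 'I_k -> RR) (v : 'I_k -> V) :
  L (\sum_(j < k) c j *: v j) = \sum_(j < k) c j *: L (v j).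
Proof.
rewrite (@big_morph _ _ L 0 +%R 0 +%R) //; last exact: linr0.
  by apply: eq_bigr => j _; rewrite linrZ.
by move=> x y; rewrite linrD.
Qed.

Lemma subsp_image (S : set V) : subsp S -> subsp (L @` S).
Proof.
move=> [S0 HS]; split; first by exists 0 => //; exact: linr0.
by move=> a _ _ [x Sx <-] [y Sy <-]; exists (a *: x + y); [exact: HS|exact: hL].
Qed.

Lemma subsp_preim (S : set W) : subsp S -> subsp (L @^-1` S).
Proof.
move=> [S0 HS]; split; first by rewrite /preimage /= linr0.
by move=> a x y Sx Sy; rewrite /preimage /= hL; apply: HS.
Qed.
End Lin.
Definition esupn (P : nat -> Prop) : \bar RR := ereal_sup [set (k%:R)%:E | k in P].

Lemma esupn_le (P Q : nat -> Prop) : (forall k, P k -> Q k) -> (esupn P <= esupn Q)%E.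
Proof. move=> PQ; apply: ereal_sup_le => _ [k Pk <-]; exists k => //; exact: PQ. Qed.

Lemma esupn_max (P : nat -> Prop) m : P m -> (forall k, P k -> (k <= m)%N) ->
  esupn P = (m%:R)%:E.
Proof.
move=> Pm ub; apply/eqP; rewrite eq_le; apply/andP; split.
  by apply: ge_ereal_sup => _ [k Pk <-]; rewrite lee_fin ler_nat; exact: ub.
by apply: ereal_sup_ubound; exists m.
Qed.

Lemma esupn_inf (P : nat -> Prop) : (forall m, exists k, P k /\ (m <= k)%N) ->
  esupn P = +oo%E.
Proof.
move=> unb.
have ub : ubound [set (k%:R)%:E | k in P] (esupn P) :=
  fun x hx => ereal_sup_ubound hx.
move: ub.
case E: (esupn P) => [r| |] ub //.
- exfalso; have [k [Pk kb]] := unb (Num.Def.archi_bound (`|r|)).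
  have := ub (k%:R)%:E; rewrite lee_fin => /(_ (ex_intro2 _ _ k Pk erefl)) kr.
  have := archi_boundP (normr_ge0 r) => h.
  have : (Num.Def.archi_bound `|r|)%:R <= k%:R :> RR by rewrite ler_nat.
  have := ler_norm r; lra.
- exfalso; have [k [Pk _]] := unb 0%N.
  by have := ub (k%:R)%:E (ex_intro2 _ _ k Pk erefl).
Qed.

Lemma nat_dicho (P : nat -> Prop) : P 0%N ->
  (exists m, P m /\ forall k, P k -> (k <= m)%N) \/ (forall m, exists k, P k /\ (m <= k)%N).
Proof.
move=> P0; case: (pselect (forall m, exists k, P k /\ (m <= k)%N)) => [h|h]; [by right|left].
move/existsNP: h => [m0 hm0].
have hb : forall k, P k -> (k <= m0)%N.
  move=> k Pk; case: (leqP k m0) => // /ltnW km; exfalso; apply: hm0; by exists k.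
have ex : exists n, `[< P n >] by exists 0%N; apply/asboolP.
have hb' : forall n, `[< P n >] -> (n <= m0)%N by move=> n /asboolP; exact: hb.
exists (ex_maxn ex hb'); case: ex_maxnP => i /asboolP Pi imax; split => // k Pk.
by apply: imax; apply/asboolP.
Qed.

Lemma esupn_ge0 (P : nat -> Prop) : P 0%N -> (0 <= esupn P)%E.
Proof. by move=> P0; apply: ereal_sup_ubound; exists 0%N. Qed.

Lemma esupn_add (P Q R : nat -> Prop) : P 0%N -> Q 0%N ->
  (forall a b, P a -> Q b -> R (a + b)%N) ->
  (forall k, R k -> exists a b, P a /\ Q b /\ (k <= a + b)%N) ->
  esupn R = (esupn P + esupn Q)%E.
Proof.
move=> P0 Q0 PQR RPQ.
case: (nat_dicho P0) => [[mP [PmP ubP]]|unbP].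
- case: (nat_dicho Q0) => [[mQ [QmQ ubQ]]|unbQ].
  + rewrite (esupn_max PmP ubP) (esupn_max QmQ ubQ) -EFinD -natrD.
    apply: esupn_max; first exact: PQR.
    move=> k /RPQ [a [b [Pa [Qb kab]]]]; apply: (leq_trans kab).
    by apply: leq_add; [exact: ubP|exact: ubQ].
  + rewrite (esupn_inf unbQ) addey; last by rewrite (esupn_max PmP ubP).
    apply: esupn_inf => m; have [k [Qk mk]] := unbQ m.
    by exists (0 + k)%N; split; [exact: PQR|].
- rewrite (esupn_inf unbP) addye; last first.
    by apply/negP => /eqP h; have := esupn_ge0 Q0; rewrite h.
  apply: esupn_inf => m; have [k [Pk mk]] := unbP m.
  by exists (k + 0)%N; rewrite addn0; split => //; rewrite -[k]addn0; exact: PQR.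
Qed.

Lemma qdimE (V : lmodType RR) (A B : set V) : qdim A B = esupn (qdim_ge A B).
Proof. by []. Qed.

Lemma qdim_ge0 (V : lmodType RR) (A B : set V) : qdim_ge A B 0.
Proof. by exists (fun _ => 0); split => [[]|c _ []]. Qed.

Lemma qdim_mono (V : lmodType RR) (A B A' B' : set V) :
  A `<=` A' -> B' `<=` B -> (qdim A B <= qdim A' B')%E.
Proof.
move=> AA BB; apply: esupn_le => k [v [Av ind]]; exists v; split.
  by move=> j; apply: AA.
by move=> c /BB; exact: ind.
Qed.

Section Rel.
Variables (V W : lmodType RR) (Rl : V -> W -> Prop).
Hypothesis Rl0 : Rl 0 0.
Hypothesis RlC : forall a x y x' y', Rl x x' -> Rl y y' -> Rl (a *: x + y) (a *: x' + y').

Lemma Rl_sum k (c : 'I_k -> RR) v w : (forall j, Rl (v j) (w j)) ->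
  Rl (\sum_(j < k) c j *: v j) (\sum_(j < k) c j *: w j).
Proof.
move=> h; apply: (big_ind2 Rl) => //.
  by move=> x1 x2 y1 y2 h1 h2; have := RlC 1 h1 h2; rewrite !scale1r.
by move=> j _; have := RlC (c j) (h j) Rl0; rewrite !addr0.
Qed.

Lemma qdim_ge_rel (A B : set V) (A' B' : set W) :
  (forall a, A a -> exists w, A' w /\ Rl a w) ->
  (forall a w, Rl a w -> B' w -> B a) ->
  forall k, qdim_ge A B k -> qdim_ge A' B' k.
Proof.
move=> tot inj k [v [Av ind]].
have [w hw] := choice (fun j => tot _ (Av j)).
exists w; split; first by move=> j; case: (hw j).
move=> c Bc; apply: ind; apply: (inj _ _ _ Bc).
by apply: Rl_sum => j; case: (hw j).
Qed.
End Rel.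

Lemma qdim_rel (V W : lmodType RR) (Rl : V -> W -> Prop) (A B : set V) (A' B' : set W) :
  Rl 0 0 -> (forall a x y x' y', Rl x x' -> Rl y y' -> Rl (a *: x + y) (a *: x' + y')) ->
  (forall a, A a -> exists w, A' w /\ Rl a w) ->
  (forall w, A' w -> exists a, A a /\ Rl a w) ->
  (forall a w, Rl a w -> (B a <-> B' w)) ->
  qdim A B = qdim A' B'.
Proof.
move=> R0 RC tot1 tot2 iff; apply/eqP; rewrite eq_le; apply/andP; split.
  apply: esupn_le; apply: (qdim_ge_rel R0 RC tot1).
  by move=> a w /iff [].
apply: esupn_le; apply: (@qdim_ge_rel W V (fun w a => Rl a w)) => //.
  by move=> a x y x' y' h1 h2; apply: RC.
by move=> w a /iff [].
Qed.

Section Add.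
Variables (V Y : lmodType RR) (L : V -> Y) (A : set V) (C : set Y).
Hypotheses (hL : linr L) (sA : subsp A) (sC : subsp C).
Let A1 := A `&` (L @^-1` C).

Lemma subspA1 : subsp A1.
Proof. by apply: subspI => //; apply: subsp_preim. Qed.

Lemma add_ge (U : set V) a b : U `<=` A1 ->
  qdim_ge (L @` A) C a -> qdim_ge A1 U b -> qdim_ge A U (a + b).
Proof.
move=> UA1 [x [Ax indx]] [y [Ay indy]].
have Ax' : forall j, exists v, A v /\ L v = x j by move=> j; case: (Ax j) => v Av <-; exists v.
have [v hv] := choice Ax'.
pose w (j : 'I_(a + b)) := match fintype.split j with inl j1 => v j1 | inr j2 => y j2 end.
have wl k : w (lshift b k) = v k.
  by rewrite /w -[lshift b k]/(unsplit (inl _ k)) unsplitK.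
have wr k : w (rshift a k) = y k.
  by rewrite /w -[rshift a k]/(unsplit (inr _ k)) unsplitK.
exists w; split.
  by move=> j; rewrite /w; case: (fintype.split j) => j1; [case: (hv j1)|case: (Ay j1)].
move=> c Uc.
have eqs : \sum_(j < a + b) c j *: w j =
  \sum_(k < a) c (lshift b k) *: v k + \sum_(k < b) c (rshift a k) *: y k.
  rewrite big_split_ord; congr (_ + _); apply: eq_bigr => k _; by rewrite ?wl ?wr.
have LC := (UA1 _ Uc).2; rewrite /preimage /= in LC.
have LC2 : C (L (\sum_(k < b) c (rshift a k) *: y k)).
  by rewrite linr_sum //; apply: subsp_sum => // k; case: (Ay k).
have c1 : forall k, c (lshift b k) = 0.
  apply: indx; have -> : \sum_(k < a) c (lshift b k) *: x k =
     L (\sum_(j < a + b) c j *: w j) - L (\sum_(k < b) c (rshift a k) *: y k).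
    rewrite eqs linrD // addrK linr_sum //; apply: eq_bigr => k _.
    by case: (hv k) => _ ->.
  exact: subspB.
have c2 : forall k, c (rshift a k) = 0.
  apply: indy; move: Uc; rewrite eqs big1 ?add0r // => k _.
  by rewrite c1 scale0r.
move=> j; case: (splitP j) => k hk.
  by have -> : j = lshift b k by apply: val_inj.
by have -> : j = rshift a k by apply: val_inj.
Qed.

Lemma add_le n : forall (U : set V), subsp U -> U `<=` A1 -> qdim_ge A U n ->
  exists a b, qdim_ge (L @` A) C a /\ qdim_ge A1 U b /\ (n <= a + b)%N.
Proof.
elim: n => [|n IH] U sU UA1 hn.
  by exists 0%N, 0%N; split; [exact: qdim_ge0|split; [exact: qdim_ge0|]].
move: hn => [w [Aw indw]].
case: (pselect (forall c : 'I_n.+1 -> RR, C (L (\sum_(j < n.+1) c j *: w j)) -> forall j, c j = 0)) => [hind|hnind].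
  exists n.+1, 0%N; split; last by split; [exact: qdim_ge0|rewrite addn0].
  exists (fun j => L (w j)); split; first by move=> j; exists (w j).
  by move=> c; rewrite -linr_sum //; exact: hind.
move/existsNP: hnind => [c /not_implyP [Cc /existsNP [j0 cj0]]].
pose u := \sum_(j < n.+1) c j *: w j.
have A1u : A1 u by split; [exact: subsp_sum|].
have nUu : ~ U u by move=> Uu; apply: cj0; exact: indw.
pose U' := fun x => exists t : RR, U (x - t *: u).
have sU' : subsp U'.
  split; first by exists 0; rewrite scale0r subr0; exact: sU.1.
  move=> a x y [t1 h1] [t2 h2]; exists (a * t1 + t2).
  have -> : a *: x + y - (a * t1 + t2) *: u = a *: (x - t1 *: u) + (y - t2 *: u).
    by rewrite scalerDl scalerBr scalerA opprD addrACA.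
  exact: sU.2.
have U'A1 : U' `<=` A1.
  move=> x [t h]; have -> : x = (x - t *: u) + t *: u by rewrite subrK.
  by apply: subspD; [exact: subspA1|exact: UA1|apply: subspZ => //; exact: subspA1].
have hw' : qdim_ge A U' n.
  exists (fun k => w (lift j0 k)); split; first by move=> k; exact: Aw.
  move=> d [t ht].
  pose e := fun j => (if unlift j0 j is Some k then d k else 0) - t * c j.
  have he : \sum_(j < n.+1) e j *: w j =
     \sum_(j < n.+1) (if unlift j0 j is Some k then d k else 0) *: w j - t *: u.
    rewrite /e /u scaler_sumr -sumrB; apply: eq_bigr => j _.
    by rewrite scalerBl scalerA.
  have he2 : \sum_(j < n.+1) (if unlift j0 j is Some k then d k else 0) *: w j
             = \sum_(k < n) d k *: w (lift j0 k).
    rewrite (bigD1_ord j0) //= unlift_none scale0r add0r.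
    by apply: eq_bigr => k _; rewrite liftK.
  have ez : forall j, e j = 0 by apply: indw; rewrite he he2.
  have t0 : t = 0.
    have := ez j0; rewrite /e unlift_none sub0r => /eqP; rewrite oppr_eq0 mulf_eq0.
    by case/orP => /eqP // h; exfalso; exact: cj0.
  by move=> k; have := ez (lift j0 k); rewrite /e liftK t0 mul0r subr0.
have [a [b [ha [[y [Ay indy]] nab]]]] := IH U' sU' U'A1 hw'.
exists a, b.+1; split => //; split; last by rewrite addnS ltnS.
pose y' (j : 'I_b.+1) := if unlift ord_max j is Some k then y k else u.
exists y'; split.
  by move=> j; rewrite /y'; case: (unlift ord_max j) => [k|] //; exact: Ay.
move=> e Ue.
have hs : \sum_(j < b.+1) e j *: y' j = e ord_max *: u + \sum_(k < b) e (lift ord_max k) *: y k.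
  rewrite (bigD1_ord ord_max) //= /y' unlift_none; congr (_ + _).
  by apply: eq_bigr => k _; rewrite liftK.
have el : forall k, e (lift ord_max k) = 0.
  apply: indy; exists (- e ord_max).
  by rewrite scaleNr opprK addrC -hs.
have em : e ord_max = 0.
  apply/eqP; apply/negP => /negP enz; apply: nUu.
  move: Ue; rewrite hs big1 ?addr0; last by move=> k _; rewrite el scale0r.
  by move/(subspZ (e ord_max)^-1 sU); rewrite scalerA mulVf // scale1r.
by move=> j; case: (unliftP ord_max j) => [k ->|->].
Qed.

Lemma qdim_add (U : set V) : subsp U -> U `<=` A1 ->
  qdim A U = (qdim (L @` A) C + qdim A1 U)%E.
Proof.
move=> sU UA1; rewrite !qdimE; apply: esupn_add; try exact: qdim_ge0.
  by move=> a b; apply: add_ge.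
by move=> k; apply: add_le.
Qed.
End Add.

Lemma fadd (T : Type) (V : zmodType) (f g : T -> V) x : (f + g) x = f x + g x.
Proof. by []. Qed.
Lemma fopp (T : Type) (V : zmodType) (f : T -> V) x : (- f) x = - f x.
Proof. by []. Qed.
Lemma fscale (T : Type) (V : lmodType RR) (a : RR) (f : T -> V) x : (a *: f) x = a *: f x.
Proof. by []. Qed.
Lemma fzero (T : Type) (V : zmodType) x : (0 : T -> V) x = 0.
Proof. by []. Qed.
Lemma oscale (a x : RR) : a *: (x : RR^o) = a * x.
Proof. by []. Qed.
Definition fE := (fadd, fopp, fscale, fzero, oscale).

Section GroupHom.
Variables (H K : groupType) (f : H -> K).
Hypothesis hf : group_hom f.
Lemma hom1 : f 1%g = 1%g.
Proof. by have h := hf 1%g 1%g; rewrite mulg1 in h; apply: (mulgI (f 1%g)); rewrite -h mulg1. Qed.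
Lemma homV x : f (x^-1)%g = ((f x)^-1)%g.
Proof. by apply/esym/mulg1_eq; rewrite -hf mulgV hom1. Qed.
Lemma homX x n : f (x ^+ n)%g = ((f x) ^+ n)%g.
Proof. by elim: n => [|n IH]; rewrite ?hom1 // !expgS hf IH. Qed.
End GroupHom.

Lemma delta1_lin (H : groupType) : linr (@delta1 H).
Proof. by move=> a f g; apply/funext => x; apply/funext => y; rewrite /delta1 !fE; ring. Qed.
Lemma delta2_lin (H : groupType) : linr (@delta2 H).
Proof.
by move=> a f g; apply/funext => x; apply/funext => y; apply/funext => z; rewrite /delta2 !fE; ring.
Qed.
Lemma delta3_lin (H : groupType) : linr (@delta3 H).
Proof.
move=> a f g; apply/funext => x; apply/funext => y; apply/funext => z; apply/funext => w.
by rewrite /delta3 !fE; ring.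
Qed.

Lemma delta21 (H : groupType) (f : C1 H) : delta2 (delta1 f) = 0.
Proof.
apply/funext => x; apply/funext => y; apply/funext => z; rewrite /delta2 /delta1 !fE.
rewrite !mulgA; ring.
Qed.
Lemma delta32 (H : groupType) (f : C2 H) : delta3 (delta2 f) = 0.
Proof.
apply/funext => x; apply/funext => y; apply/funext => z; apply/funext => w.
rewrite /delta3 /delta2 !fE !mulgA; ring.
Qed.

Lemma pull2_lin (G Gam : groupType) (p : G -> Gam) : linr (pull2 p).
Proof. by move=> a f g; apply/funext => x; apply/funext => y; rewrite /pull2 !fE. Qed.

Lemma delta2_pull (G Gam : groupType) (p : G -> Gam) (z : C2 Gam) g1 g2 g3 :
  group_hom p -> delta2 (pull2 p z) g1 g2 g3 = delta2 z (p g1) (p g2) (p g3).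
Proof. by move=> hp; rewrite /delta2 /pull2 !hp. Qed.

Lemma pull_delta1 (G Gam : groupType) (p : G -> Gam) (h : C1 Gam) :
  group_hom p -> pull2 p (delta1 h) = delta1 (fun g => h (p g)).
Proof. by move=> hp; apply/funext => x; apply/funext => y; rewrite /pull2 /delta1 hp. Qed.

Lemma bound_lin (x y a Mx My : RR) : `|x| <= Mx -> `|y| <= My -> `|a * x + y| <= `|a| * Mx + My.
Proof.
move=> hx hy; apply: (le_trans (ler_normD _ _)); apply: lerD => //.
by rewrite normrM; apply: ler_wpM2l.
Qed.

Lemma subsp_bounded1 (H : groupType) : subsp (@bounded1 H).
Proof.
split; first by exists 0 => h; rewrite fE normr0.
move=> a x y [Mx hx] [My hy]; exists (`|a| * Mx + My) => h; rewrite !fE.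
exact: bound_lin.
Qed.
Lemma subsp_bounded2 (H : groupType) : subsp (@bounded2 H).
Proof.
split; first by exists 0 => h h'; rewrite fE normr0.
move=> a x y [Mx hx] [My hy]; exists (`|a| * Mx + My) => h h'; rewrite !fE.
exact: bound_lin.
Qed.
Lemma subsp_bounded3 (H : groupType) : subsp (@bounded3 H).
Proof.
split; first by exists 0 => h h' h''; rewrite fE normr0.
move=> a x y [Mx hx] [My hy]; exists (`|a| * Mx + My) => h h' h''; rewrite !fE.
exact: bound_lin.
Qed.

Lemma subsp_ker (V W : lmodType RR) (L : V -> W) : linr L -> subsp [set x | L x = 0].
Proof.
move=> hL; split; first exact: linr0.
move=> a x y; rewrite /mkset => Lx Ly. by rewrite hL Lx Ly scaler0 addr0.
Qed.

Lemma subspT (V : lmodType RR) : subsp [set: V].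
Proof. by []. Qed.

Lemma subspZ2 (H : groupType) : subsp (@Z2 H).
Proof. exact: subsp_ker (@delta2_lin H). Qed.
Lemma subspB2 (H : groupType) : subsp (@B2 H).
Proof. exact: (subsp_image (@delta1_lin H) (@subspT _)). Qed.
Lemma subspZb2 (H : groupType) : subsp (@Zb2 H).
Proof.
have -> : @Zb2 H = @bounded2 H `&` @Z2 H by [].
by apply: subspI; [exact: subsp_bounded2|exact: subspZ2].
Qed.
Lemma subspBb3 (H : groupType) : subsp (@Bb3 H).
Proof. exact: (subsp_image (@delta2_lin H) (@subsp_bounded2 H)). Qed.
Lemma subspB3 (H : groupType) : subsp (@B3 H).
Proof. exact: (subsp_image (@delta2_lin H) (@subspT _)). Qed.

Lemma arch0 (a K : RR) : (forall n : nat, n%:R * `|a| <= K) -> a = 0.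
Proof.
move=> h; apply/eqP; apply/negP => /negP anz.
have pa : 0 < `|a| by rewrite normr_gt0.
have K0 : 0 <= K by have := h 0%N; rewrite mul0r.
have := @archi_boundP _ (K / `|a|) (divr_ge0 K0 (ltW pa)).
rewrite ltr_pdivrMr // => hK.
by have := h (Num.Def.archi_bound (K / `|a|)); lra.
Qed.

Lemma arch0S (a K : RR) : (forall n : nat, n.+1%:R * `|a| <= K) -> a = 0.
Proof.
move=> h; apply: (arch0 (K := K)) => n; apply: le_trans (h n).
by apply: ler_wpM2r; [exact: normr_ge0|rewrite ler_nat].
Qed.

Lemma div_le (x y a b : RR) : 0 < a -> 0 < b -> x * b <= y * a -> x / a <= y / b.
Proof.
move=> pa pb h; rewrite -subr_ge0.
have -> : y / b - x / a = (y * a - x * b) / (a * b).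
  by field; apply/andP; split; apply: lt0r_neq0.
by apply: divr_ge0; [lra|apply: mulr_ge0; lra].
Qed.

Lemma sup_pick (x : nat -> RR) (K : RR) :
  (forall m n, (x m - K) * n.+1%:R <= (x n + K) * m.+1%:R) ->
  exists v, forall n, `|n.+1%:R * v - x n| <= K.
Proof.
move=> h.
pose E := [set (x m - K) / m.+1%:R | m in [set: nat]].
exists (sup E) => n.
have pn : 0 < n.+1%:R :> RR by rewrite ltr0n.
have hE : E !=set0 by exists ((x 0%N - K) / 1%:R); exists 0%N.
have ubE : forall y, E y -> y <= (x n + K) / n.+1%:R.
  by move=> _ [m _ <-]; apply: div_le => //; rewrite ltr0n.
have hub : has_ubound E by exists ((x n + K) / n.+1%:R) => y; exact: ubE.
have le1 : sup E <= (x n + K) / n.+1%:R by apply: ge_sup => // y; exact: ubE.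
have le2 : (x n - K) / n.+1%:R <= sup E by apply: ub_le_sup => //; exists n.
move: le1 le2; rewrite ler_pdivlMr // ler_pdivrMr // => le1 le2.
rewrite ler_norml; apply/andP; split; nra.
Qed.

Section Quasi.
Variable H : groupType.
Implicit Types f : C1 H.

Lemma qm_bound f M (hM : forall a b, `|delta1 f a b| <= M) a b :
  `|f (a * b)%g - f a - f b| <= M.
Proof.
have -> : f (a * b)%g - f a - f b = - delta1 f a b by rewrite /delta1; ring.
by rewrite normrN.
Qed.

Lemma homog0 f : homogeneous f -> f 1%g = 0.
Proof. by move=> hf; have := hf 1%g 0%N; rewrite expg0 mul0r. Qed.

Lemma homogN f : Q f -> forall h, f (h^-1)%g = - f h.
Proof.
move=> [[M hM] hf] h; apply/eqP; rewrite -addr_eq0; apply/eqP.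
apply: (arch0 (K := M)) => n.
have := hM (h ^+ n)%g ((h ^+ n)^-1)%g.
rewrite /delta1 mulgV homog0 // -expVgn !hf.
have -> : n%:R * f (h^-1)%g - 0 + n%:R * f h = n%:R * (f (h^-1)%g + f h) by ring.
by rewrite normrM ger0_norm ?ler0n.
Qed.

Lemma conjXn (g x : H) n : ((g * x * g^-1) ^+ n)%g = (g * x ^+ n * g^-1)%g.
Proof.
elim: n => [|n IH]; first by rewrite !expg0 mulg1 mulgV.
by rewrite expgS IH expgS !mulgA mulgVK.
Qed.

Lemma Q_conj f : Q f -> forall g x, f (g * x * g^-1)%g = f x.
Proof.
move=> Qf g x; have [[M hM] hf] := Qf; apply/eqP; rewrite -subr_eq0; apply/eqP.
apply: (arch0 (K := M + M)) => n.
have e1 := qm_bound hM (g * x ^+ n)%g (g^-1)%g.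
have e2 := qm_bound hM g (x ^+ n)%g.
rewrite homogN // in e1.
have := hf (g * x * g^-1)%g n; rewrite conjXn => e3.
rewrite e3 in e1; rewrite hf in e2.
have -> : n%:R * `|f (g * x * g^-1)%g - f x| = `|n%:R * f (g * x * g^-1)%g - n%:R * f x|.
  by rewrite -mulrBr normrM ger0_norm ?ler0n.
move: e1 e2; set A := n%:R * _; set B := f (g * x ^+ n)%g; set Cc := n%:R * f x.
move=> e1 e2; rewrite (ler_norml (A - Cc)); move: e1 e2; rewrite !ler_norml => /andP[? ?] /andP[? ?].
apply/andP; split; lra.
Qed.

Lemma homog_bounded0 f : homogeneous f -> (exists K, forall x, `|f x| <= K) -> forall x, f x = 0.
Proof.
move=> hf [K hK] x; apply: (arch0 (K := K)) => n.
by have := hK (x ^+ n)%g; rewrite hf normrM ger0_norm ?ler0n.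
Qed.

Lemma subsp_homog : subsp (@homogeneous H).
Proof.
split; first by move=> h n; rewrite !fE mulr0.
by move=> a x y hx hy h n; rewrite !fE hx hy; ring.
Qed.

Lemma subspQ : subsp (@Q H).
Proof.
have -> : @Q H = (delta1 (H:=H)) @^-1` (@bounded2 H) `&` @homogeneous H by [].
apply: subspI; last exact: subsp_homog.
apply: subsp_preim; [exact: delta1_lin|exact: subsp_bounded2].
Qed.

Lemma subspHom1 : subsp (@Hom1 H).
Proof.
split; first by move=> x y; rewrite !fE addr0.
by move=> a f g hf hg x y; rewrite !fE hf hg; ring.
Qed.

Lemma Hom1_homog f : Hom1 f -> homogeneous f.
Proof.
move=> hf h; elim => [|n IH].
  have := hf 1%g 1%g; rewrite mulg1 expg0 mul0r => e; lra.
by rewrite expgS hf IH -addn1 natrD; ring.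
Qed.

Lemma Hom1_Q f : Hom1 f -> Q f.
Proof.
move=> hf; split; last exact: Hom1_homog.
exists 0 => a b; rewrite /delta1 hf.
have -> : f b - (f a + f b) + f a = 0 by ring.
by rewrite normr0.
Qed.

Lemma homogenize (phi : C1 H) M : (forall a b, `|delta1 phi a b| <= M) ->
  exists nu, Q nu /\ forall h, `|nu h - phi h| <= M + M.
Proof.
move=> hM.
have q := qm_bound hM.
have M0 : 0 <= M by apply: le_trans (hM 1%g 1%g); exact: normr_ge0.
have F : forall h m n, `|phi (h ^+ (m * n))%g - n%:R * phi (h ^+ m)%g| <= n.+1%:R * M.
  move=> h m; elim => [|n IH].
    rewrite muln0 expg0 mul0r subr0 mul1r.
    have := q 1%g 1%g; rewrite mulg1.
    have -> : phi 1%g - phi 1%g - phi 1%g = - phi 1%g by ring.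
    by rewrite normrN.
  rewrite mulnS expgnDr.
  have := q (h ^+ m)%g (h ^+ (m * n))%g; move: IH.
  set P1 := phi (h ^+ m)%g; set P2 := phi (h ^+ (m * n))%g; set P3 := phi _.
  rewrite !ler_norml -[n.+2]addn1 -[n.+1]addn1 !natrD => /andP[? ?] /andP[? ?].
  apply/andP; split; nra.
have hv : forall h, exists v, forall n, `|n.+1%:R * v - phi (h ^+ n.+1)%g| <= M + M.
  move=> h; apply: sup_pick => m n.
  have Fa := F h m.+1 n.+1; have Fb := F h n.+1 m.+1.
  rewrite mulnC in Fb; move: Fa Fb.
  set P1 := phi (h ^+ (_ * _))%g; set Pm := phi (h ^+ m.+1)%g; set Pn := phi (h ^+ n.+1)%g.
  rewrite !ler_norml -[n.+2]addn1 -[m.+2]addn1 -[n.+1]addn1 -[m.+1]addn1 !natrD.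
  have : 0 <= m%:R :> RR by rewrite ler0n.
  have : 0 <= n%:R :> RR by rewrite ler0n.
  move=> ? ? /andP[? ?] /andP[? ?]; nra.
have [nu hnu] := choice hv.
have hnu1 : forall h, `|nu h - phi h| <= M + M.
  by move=> h; have := hnu h 0%N; rewrite mul1r expg1.
have hom : homogeneous nu.
  move=> h k; case: k => [|k].
    rewrite expg0 mul0r; apply: (arch0S (K := M + M + M)) => n.
    have e1 := hnu 1%g n; rewrite expg1n in e1.
    have e2 := q 1%g 1%g; rewrite mulg1 in e2.
    rewrite -[X in X * _](ger0_norm (ler0n _ n.+1)) -normrM.
    move: e1 e2; set P := phi 1%g; rewrite !ler_norml => /andP[? ?] /andP[? ?].
    apply/andP; split; nra.
  apply/eqP; rewrite -subr_eq0; apply/eqP.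
  apply: (arch0S (K := (M + M) + (M + M))) => n.
  have e1 := hnu (h ^+ k.+1)%g n.
  have e2 := hnu h (k.+1 * n.+1).-1.
  rewrite -expgnA in e1.
  rewrite prednK ?muln_gt0 // in e2.
  rewrite natrM in e2.
  rewrite -[X in X * _](ger0_norm (ler0n _ n.+1)) -normrM.
  move: e1 e2; set P := phi _; set a := nu _; set b := nu h.
  set kk := k.+1%:R; set nn := n.+1%:R.
  have -> : kk * nn * b = nn * (kk * b) by rewrite /kk /nn; ring.
  rewrite !ler_norml => /andP[? ?] /andP[? ?].
  apply/andP; split; nra.
exists nu; refine (conj _ hnu1).
split => //; exists (M + (M + M) + (M + M) + (M + M)) => a b.
have := hM a b; have := hnu1 a; have := hnu1 b; have := hnu1 (a * b)%g.
rewrite /delta1; set x1 := nu (a * b)%g; set x2 := nu a; set x3 := nu b.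
rewrite !ler_norml => /andP[? ?] /andP[? ?] /andP[? ?] /andP[? ?].
apply/andP; split; lra.
Qed.
End Quasi.

Section Ext.
Variables (N G Gam : groupType) (i : N -> G) (p : G -> Gam) (s : Gam -> G).
Hypotheses (hse : short_exact i p) (ps : forall gam, p (s gam) = gam) (s1 : s 1%g = 1%g).

Let hi : group_hom i. Proof. by case: hse. Qed.
Let hp : group_hom p. Proof. by case: hse. Qed.
Let inj : injective i. Proof. by case: hse. Qed.
Let kerP : forall g, p g = 1%g <-> exists n, i n = g. Proof. by case: hse. Qed.

Lemma pi1 n : p (i n) = 1%g.
Proof. by apply/kerP; exists n. Qed.

Lemma ipreP x : p x = 1%g -> i (ipre i x) = x.
Proof.
move=> /kerP ex; rewrite /ipre.
by have := @xgetPex _ 1%g [set n | i n = x] ex.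
Qed.

Lemma ipre_i n : ipre i (i n) = n.
Proof. by apply: inj; rewrite ipreP // pi1. Qed.

Lemma ipre1 : ipre i 1%g = 1%g.
Proof. by rewrite -(hom1 hi) ipre_i. Qed.

Lemma p_sinv g : p (g * (s (p g))^-1)%g = 1%g.
Proof. by rewrite hp (homV hp) ps mulgV. Qed.

Definition cc (g1 g2 : Gam) : N := ipre i (s g1 * s g2 * (s (g1 * g2)%g)^-1)%g.

Lemma i_cc g1 g2 : i (cc g1 g2) = (s g1 * s g2 * (s (g1 * g2)%g)^-1)%g.
Proof. by apply: ipreP; rewrite !hp (homV hp) !ps mulgV. Qed.

Lemma mu_s_i (mu : C1 N) n : mu_s i p s mu (i n) = mu n.
Proof. by rewrite /mu_s pi1 s1 invg1 mulg1 ipre_i. Qed.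

Lemma mu_s_s (mu : C1 N) gam : mu_s i p s mu (s gam) = mu 1%g.
Proof. by rewrite /mu_s ps mulgV ipre1. Qed.

Lemma tau_repE (mu : C1 N) g1 g2 :
  tau_rep i p s mu g1 g2 = mu 1%g + mu 1%g - mu (cc g1 g2).
Proof.
rewrite /tau_rep /delta1 !mu_s_s /mu_s hp !ps /cc; ring.
Qed.

Lemma KL g1 g2 : exists a b c : N, forall mu : C1 N, G_invariant i mu ->
  delta1 (mu_s i p s mu) g1 g2 - tau_rep i p s mu (p g1) (p g2) =
  mu a + mu b + mu c - mu (a * b * c)%g - mu 1%g - mu 1%g.
Proof.
pose s1' := s (p g1); pose s2' := s (p g2).
pose a := ipre i (g1 * s1'^-1)%g; pose n2 := ipre i (g2 * s2'^-1)%g.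
have ia : i a = (g1 * s1'^-1)%g by apply: ipreP; exact: p_sinv.
have in2 : i n2 = (g2 * s2'^-1)%g by apply: ipreP; exact: p_sinv.
pose b := ipre i (s1' * i n2 * s1'^-1)%g.
have ib : i b = (s1' * i n2 * s1'^-1)%g.
  by apply: ipreP; rewrite !hp (homV hp) pi1 mulg1 mulgV.
exists a, b, (cc (p g1) (p g2)) => mu Gmu.
have mub : mu b = mu n2 by apply: (Gmu s1').
have e : ipre i (g1 * g2 * (s (p (g1 * g2)%g))^-1)%g = (a * b * cc (p g1) (p g2))%g.
  apply: inj; rewrite ipreP ?p_sinv // !hi ia ib in2 i_cc hp -/s1' -/s2'.
  by rewrite !mulgA !mulgVK.
rewrite tau_repE /delta1 /mu_s -/s1' -/s2' e -/a -/n2 mub; ring.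
Qed.

Lemma QNG_defect (mu : C1 N) : QNG i mu -> exists K, forall g1 g2,
  `|delta1 (mu_s i p s mu) g1 g2 - tau_rep i p s mu (p g1) (p g2)| <= K.
Proof.
move=> [[[M hM] hom] Gmu]; exists (M + M) => g1 g2.
have [a [b [c hKL]]] := KL g1 g2; rewrite hKL // homog0 //.
have e1 := qm_bound hM (a * b)%g c; have e2 := qm_bound hM a b.
move: e1 e2; set x := mu (a * b * c)%g; set y := mu (a * b)%g.
rewrite !ler_norml => /andP[? ?] /andP[? ?]; apply/andP; split; lra.
Qed.

Lemma H1NG_pull (h : C1 N) : H1NG i h ->
  pull2 p (tau_rep i p s h) = delta1 (mu_s i p s h).
Proof.
move=> [hh Gh]; apply/funext => g1; apply/funext => g2; rewrite /pull2.
have [a [b [c hKL]]] := KL g1 g2; have := hKL h Gh.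
rewrite !hh homog0; last exact: Hom1_homog.
move=> e; apply/eqP; rewrite eq_sym -subr_eq0 e; apply/eqP; ring.
Qed.

Lemma H1NG_Z2 (h : C1 N) : H1NG i h -> Z2 (tau_rep i p s h).
Proof.
move=> hh; rewrite /Z2 /mkset; apply/funext => x; apply/funext => y; apply/funext => z.
have := delta2_pull (tau_rep i p s h) (s x) (s y) (s z) hp; rewrite !ps => <-.
by rewrite H1NG_pull // delta21.
Qed.


Lemma tau_lin : linr (tau_rep i p s).
Proof.
move=> a mu nu; apply/funext => x; apply/funext => y.
by rewrite /tau_rep /delta1 /mu_s !fE; ring.
Qed.

Lemma dtau_lin : linr (dtau_rep i p s).
Proof. by move=> a mu nu; rewrite /dtau_rep tau_lin delta2_lin. Qed.

Lemma subspGinv : subsp (G_invariant i).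
Proof.
split; first by move=> g n n' _; rewrite !fE.
by move=> a x y hx hy g n n' e; rewrite !fE (hx g n n' e) (hy g n n' e).
Qed.

Lemma subspQNG : subsp (QNG i).
Proof. exact: (subspI (@subspQ N) subspGinv). Qed.

Lemma subspH1NG : subsp (H1NG i).
Proof. exact: (subspI (@subspHom1 N) subspGinv). Qed.

Definition restr (nu : C1 G) : C1 N := fun n => nu (i n).

Lemma restr_lin : linr restr.
Proof. by move=> a x y; apply/funext => n; rewrite /restr !fE. Qed.

Lemma subsp_restrQ : subsp (restrQ i).
Proof. exact: (subsp_image restr_lin (@subspQ G)). Qed.

Let U := sumset (H1NG i) (restrQ i).

Lemma subspU : subsp U.
Proof. exact: subsp_sumset subspH1NG subsp_restrQ. Qed.

Lemma restr_Ginv (nu : C1 G) : Q nu -> G_invariant i (restr nu).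
Proof. by move=> Qnu g n n' e; rewrite /restr e Q_conj. Qed.

Lemma restr_Q (nu : C1 G) : Q nu -> Q (restr nu).
Proof.
move=> [[M hM] hom]; split.
  by exists M => a b; rewrite /delta1 /restr !hi; apply: hM.
by move=> h n; rewrite /restr (homX hi) hom.
Qed.

Lemma restrQ_QNG : restrQ i `<=` QNG i.
Proof. by move=> _ [nu Qnu <-]; split; [exact: restr_Q|exact: restr_Ginv]. Qed.

Lemma H1NG_QNG : H1NG i `<=` QNG i.
Proof. by move=> h [hh Gh]; split => //; exact: Hom1_Q. Qed.

Lemma U_QNG : U `<=` QNG i.
Proof.
move=> _ [x [y [hx [hy ->]]]]; apply: subspD; first exact: subspQNG.
  exact: H1NG_QNG.
exact: restrQ_QNG.
Qed.

Lemma restr_tau (nu : C1 G) : Q nu -> exists b1, bounded2 b1 /\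
  tau_rep i p s (restr nu) = b1 - delta1 (fun gam => nu (s gam)).
Proof.
move=> Qnu; have [[M hM] hom] := Qnu.
exists (tau_rep i p s (restr nu) + delta1 (fun gam => nu (s gam))); split; last by rewrite addrK.
exists (M + M) => x y; rewrite !fE tau_repE /restr i_cc (hom1 hi) homog0 //.
rewrite /delta1.
have e1 := qm_bound hM (s x * s y)%g ((s (x * y)%g)^-1)%g.
have e2 := qm_bound hM (s x) (s y).
rewrite homogN // in e1.
move: e1 e2; set A := nu (_ * _ * _)%g; set B := nu (s x * s y)%g.
rewrite !ler_norml => /andP[? ?] /andP[? ?]; apply/andP; split; lra.
Qed.

Lemma U_A1 : U `<=` QNG i `&` (dtau_rep i p s @^-1` Bb3 (H:=Gam)).
Proof.
move=> mu Umu; split; first exact: U_QNG.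
move: Umu => [h [r [hh [[nu Qnu <-] ->]]]].
rewrite /preimage /= linrD; last exact: dtau_lin.
have [b1 [bb1 e]] := restr_tau Qnu.
apply: subspD; first exact: subspBb3.
  exists 0; first exact: (subsp_bounded2 _).1.
  by rewrite linr0 /dtau_rep; [rewrite (H1NG_Z2 hh)|exact: delta2_lin].
exists b1 => //; rewrite /dtau_rep -/(restr nu) e linrB; last exact: delta2_lin.
by rewrite delta21 subr0.
Qed.

Lemma dtau_Zb3 (mu : C1 N) : QNG i mu -> (Zb3 (H:=Gam) `&` B3 (H:=Gam)) (dtau_rep i p s mu).
Proof.
move=> Qmu; split; last by exists (tau_rep i p s mu).
split; last by rewrite /dtau_rep delta32.
have [K hK] := QNG_defect Qmu.
exists (K + K + K + K) => x y z.
have := delta2_pull (tau_rep i p s mu) (s x) (s y) (s z) hp; rewrite !ps /dtau_rep => <-.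
have e : delta2 (delta1 (mu_s i p s mu)) (s x) (s y) (s z) = 0 by rewrite delta21.
move: e; rewrite /delta2 /pull2.
have := hK (s y) (s z); have := hK (s x * s y)%g (s z); have := hK (s x) (s y * s z)%g;
  have := hK (s x) (s y).
rewrite !hp !ps.
set a1 := delta1 _ (s y) (s z); set a2 := delta1 _ (s x * s y)%g (s z);
  set a3 := delta1 _ (s x) (s y * s z)%g; set a4 := delta1 _ (s x) (s y).
rewrite !ler_norml => /andP[? ?] /andP[? ?] /andP[? ?] /andP[? ?] ?.
apply/andP; split; lra.
Qed.

Lemma subsp_impc : subsp (im_pstar_c p).
Proof.
apply: subsp_sumset; last exact: subspB2.
exact: (subsp_image (@pull2_lin _ _ p) (@subspZb2 Gam)).
Qed.

Definition Rel (mu : C1 N) (w : C2 G) := QNG i mu /\ exists b z, bounded2 b /\ Z2 z /\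
  tau_rep i p s mu = b + z /\ im_pstar_c p (w - pull2 p z).

Lemma Rel0 : Rel 0 0.
Proof.
split; first exact: subspQNG.1.
exists 0, 0; split; first exact: (@subsp_bounded2 Gam).1.
split; first exact: (@subspZ2 Gam).1.
split; first by rewrite addr0 linr0 //; exact: tau_lin.
by rewrite (linr0 (@pull2_lin _ _ p)) subr0; exact: subsp_impc.1.
Qed.

Lemma RelC a x y x' y' : Rel x x' -> Rel y y' -> Rel (a *: x + y) (a *: x' + y').
Proof.
move=> [Qx [bx [zx [hbx [hzx [ex hx]]]]]] [Qy [by_ [zy [hby [hzy [ey hy]]]]]].
split; first by apply: subspQNG.2.
exists (a *: bx + by_), (a *: zx + zy); split; first by apply: (@subsp_bounded2 Gam).2.
split; first by apply: (@subspZ2 Gam).2.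
split; first by rewrite tau_lin ex ey scalerDr addrACA.
have -> : a *: x' + y' - pull2 p (a *: zx + zy) = a *: (x' - pull2 p zx) + (y' - pull2 p zy).
  by rewrite (@pull2_lin _ _ p a zx zy) scalerBr opprD addrACA.
by apply: subsp_impc.2.
Qed.

Lemma tot1 mu : (QNG i `&` dtau_rep i p s @^-1` Bb3 (H:=Gam)) mu ->
  exists w, (im_cG (G:=G) `&` im_pstar p) w /\ Rel mu w.
Proof.
move=> [Qmu [b0 bb0 eb0]].
pose z := tau_rep i p s mu - b0.
have Zz : Z2 z.
  by rewrite /Z2 /mkset /z linrB ?eb0 ?subrr //; exact: delta2_lin.
exists (pull2 p z); split; last first.
  split => //; exists b0, z; split => //; split => //; split; first by rewrite /z addrC subrK.
  by rewrite subrr; exact: subsp_impc.1.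
split; last first.
  by apply: sumsetl; [exact: subspB2|exists z].
have [K hK] := QNG_defect Qmu.
pose be := pull2 p z - delta1 (mu_s i p s mu).
have -> : pull2 p z = be + delta1 (mu_s i p s mu) by rewrite /be subrK.
exists be, (delta1 (mu_s i p s mu)); split; last by split => //; exists (mu_s i p s mu).
split.
  move: bb0 => [Mb hMb]; exists (K + Mb) => x y.
  rewrite /be /z !fE /pull2 !fE.
  move: (hK x y) (hMb (p x) (p y)); set A := tau_rep _ _ _ _ _ _; set B := b0 _ _.
  rewrite !ler_norml => /andP[? ?] /andP[? ?]; apply/andP; split; lra.
rewrite /be linrB; last exact: delta2_lin.
rewrite delta21 subr0; apply/funext => x; apply/funext => y; apply/funext => t.
by rewrite delta2_pull // Zz.
Qed.

Lemma gen (V : zmodType) (x y u : V) : y + u = x + y - (x - u).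
Proof. by rewrite opprB addrA [x + y]addrC addrAC addrK. Qed.

Lemma normB (x : RR) : - `|x| <= x /\ x <= `|x|.
Proof. by apply/andP; rewrite -ler_norml. Qed.

Lemma tot2 w : (im_cG (G:=G) `&` im_pstar p) w ->
  exists mu, (QNG i `&` dtau_rep i p s @^-1` Bb3 (H:=Gam)) mu /\ Rel mu w.
Proof.
move=> [[be [b0 [Zbe [[f1 _ eb0] ew]]]] [a' [b0' [[z0 Zz0 ez0] [[f0 _ eb0'] ew']]]]].
subst b0 b0' a'.
move: Zbe => [[Mb hMb] Zbe].
pose f : C1 G := fun g => f1 g - f0 g.
have E0 : forall a b, f (a * b)%g = f a + f b - z0 (p a) (p b) + be a b.
  move=> a b; have := congr1 (fun F => F a b) (etrans (esym ew') ew).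
  rewrite /pull2 /delta1 /f !fE => e; lra.
have z011 : forall gam, z0 1%g gam = z0 1%g 1%g.
  move=> gam; have := congr1 (fun F => F 1%g 1%g gam) Zz0.
  rewrite /delta2 !mul1g !fE => e; lra.
pose phi : C1 N := fun n => f (i n).
have dphi : forall a b, `|delta1 phi a b| <= `|z0 1%g 1%g| + Mb.
  move=> a b; rewrite /delta1 /phi hi E0 !pi1.
  have := hMb (i a) (i b); set B := be _ _.
  have [? ?] := normB (z0 1%g 1%g).
  rewrite !ler_norml => /andP[? ?]; apply/andP; split; lra.
have [mu [Qmu hmu]] := homogenize dphi.
set D := _ + _ in hmu.
have Gmu : G_invariant i mu.
  move=> g n n' e; apply/eqP; rewrite -subr_eq0; apply/eqP.
  pose cg := f g + f (g^-1)%g - z0 (p g) 1%g - z0 (p g) (p (g^-1)%g).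
  apply: (arch0 (K := D + D + (Mb + Mb) + `|cg|)) => k.
  have ek : i (n' ^+ k)%g = (g * i (n ^+ k) * g^-1)%g by rewrite !(homX hi) e conjXn.
  have cb : forall x, p x = 1%g -> f (g * x * g^-1)%g = f x + cg + be g x + be (g * x)%g (g^-1)%g.
    move=> x px; rewrite E0 E0 hp px mulg1 /cg; ring.
  have e1 := hmu (n' ^+ k)%g; have e2 := hmu (n ^+ k)%g.
  rewrite /phi ek cb ?pi1 // in e1; rewrite /phi in e2.
  have hom := Qmu.2; rewrite !hom in e1 e2.
  have := hMb g (i (n ^+ k))%g; have := hMb (g * i (n ^+ k))%g (g^-1)%g.
  have [? ?] := normB cg.
  rewrite -[X in X * _](ger0_norm (ler0n _ k)) -normrM mulrBr.
  move: e1 e2; set B1 := be g _; set B2 := be _ (g^-1)%g; set F := f _.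
  rewrite !ler_norml => /andP[? ?] /andP[? ?] /andP[? ?] /andP[? ?].
  apply/andP; split; lra.
have QNGmu : QNG i mu by [].
pose z := z0 - delta1 (fun gam => f (s gam)).
have Zz : Z2 z.
  rewrite /Z2 /mkset /z linrB; last exact: delta2_lin.
  by rewrite Zz0 delta21 subrr.
pose b := tau_rep i p s mu - z.
have bb : bounded2 b.
  exists (D + Mb + Mb + `|z0 1%g 1%g|) => x y.
  rewrite /b /z !fE tau_repE homog0; last exact: Qmu.2.
  rewrite /delta1.
  have e1 := E0 (s x) (s y); have e2 := E0 (i (cc x y)) (s (x * y)%g).
  rewrite pi1 i_cc mulgVK !ps z011 in e2; rewrite !ps in e1.
  have := hmu (cc x y); rewrite /phi.
  have := hMb (s x) (s y); have := hMb (s x * s y * (s (x * y)%g)^-1)%g (s (x * y)%g).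
  have [? ?] := normB (z0 1%g 1%g).
  rewrite i_cc.
  move: e1 e2; set Fi := f (_ * _ * _)%g.
  rewrite !ler_norml => ? ? /andP[? ?] /andP[? ?] /andP[? ?].
  apply/andP; split; lra.
have eb : tau_rep i p s mu = b + z by rewrite /b subrK.
clearbody b.
exists mu; split.
  split => //; exists b => //.
  have Zz' : delta2 z = 0 := Zz.
  by rewrite /dtau_rep eb (linrD (@delta2_lin Gam)) Zz' addr0.
split => //; exists b, z; split => //; split => //; split => //.
apply: sumsetr; first exact: (subsp_image (@pull2_lin _ _ p) (@subspZb2 Gam)).
exists (f0 + (fun g => f (s (p g)))) => //.
rewrite (linrD (@delta1_lin G)) ew' /z (linrB (@pull2_lin _ _ p)) pull_delta1 //.
exact: gen.
Qed.

Lemma iff1 mu w : Rel mu w -> U mu -> im_pstar_c p w.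
Proof.
move=> [Qmu [b [z [bb [Zz [ez hw]]]]]] [h [r [hh [[nu Qnu er] emu]]]].
subst r mu.
have [b1 [bb1 eb1]] := restr_tau Qnu.
have er : (fun n => nu (i n)) = restr nu by [].
rewrite er in ez.
pose zb := z - tau_rep i p s h + delta1 (fun gam => nu (s gam)).
have ezb : zb = b1 - b.
  move: ez; rewrite (linrD tau_lin) eb1 => ez.
  apply/funext => x; apply/funext => y; rewrite /zb !fE.
  have := congr1 (fun F => F x y) ez; rewrite !fE => e; lra.
have Zbzb : Zb2 zb.
  split; first by rewrite ezb; apply: subspB => //; exact: subsp_bounded2.
  rewrite /zb (linrD (@delta2_lin Gam)) (linrB (@delta2_lin Gam)) delta21 addr0.
  have Zz' : delta2 z = 0 := Zz; have Zh : delta2 (tau_rep i p s h) = 0 := H1NG_Z2 hh.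
  by rewrite Zz' Zh subrr.
have hpz : im_pstar_c p (pull2 p z).
  have -> : pull2 p z = pull2 p zb + delta1 (fun g => mu_s i p s h g - nu (s (p g))).
    rewrite (linrD (@delta1_lin G)) -(H1NG_pull hh) /zb.
    apply/funext => x; apply/funext => y; rewrite /pull2 /delta1 !fE hp; ring.
  exists (pull2 p zb), (delta1 (fun g => mu_s i p s h g - nu (s (p g)))); split; first by exists zb.
  by split => //; exists (fun g => mu_s i p s h g - nu (s (p g))).
have -> : w = (w - pull2 p z) + pull2 p z by rewrite subrK.
by apply: subspD => //; exact: subsp_impc.
Qed.

Lemma iff2 mu w : Rel mu w -> im_pstar_c p w -> U mu.
Proof.
move=> [Qmu [b [z [[Mb hMb] [Zz [ez hw]]]]]] hw0.
have hpz : im_pstar_c p (pull2 p z).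
  have -> : pull2 p z = w - (w - pull2 p z) by rewrite opprB addrC subrK.
  by apply: subspB => //; exact: subsp_impc.
move: hpz => [a' [bf [[z1 [[Mz1 hMz1] Zz1] ez1] [[f _ ef] epz]]]].
subst a' bf.
have [K hK] := QNG_defect Qmu.
have key : forall g1 g2, delta1 f g1 g2 = z (p g1) (p g2) - z1 (p g1) (p g2).
  move=> g1 g2; have := congr1 (fun F => F g1 g2) epz; rewrite /pull2 !fE => e; lra.
have ezp : forall x y, tau_rep i p s mu x y = b x y + z x y.
  by move=> x y; rewrite ez !fE.
pose psi : C1 G := fun g => mu_s i p s mu g - f g.
have dpsi : forall a c, `|delta1 psi a c| <= K + Mb + Mz1.
  move=> a c.
  have -> : delta1 psi a c = (delta1 (mu_s i p s mu) a c - tau_rep i p s mu (p a) (p c))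
       + b (p a) (p c) + z1 (p a) (p c).
    have := key a c; have := ezp (p a) (p c); rewrite /psi /delta1 => e1 e2; lra.
  move: (hK a c) (hMb (p a) (p c)) (hMz1 (p a) (p c)).
  set X := _ - _; set B := b _ _; set Z := z1 _ _.
  rewrite !ler_norml => /andP[? ?] /andP[? ?] /andP[? ?]; apply/andP; split; lra.
have [nu [Qnu hnu]] := homogenize dpsi.
set D := _ + _ in hnu.
pose k := z 1%g 1%g - z1 1%g 1%g.
pose h : C1 N := fun n => f (i n) - k.
have hh : Hom1 h.
  move=> n1 n2; have := key (i n1) (i n2); rewrite !pi1 /h /delta1 hi -/k => e; lra.
have d0 : forall n, (mu - h - restr nu) n = 0.
  apply: (@homog_bounded0 N (mu - h - restr nu)).
    apply: (subspB (@subsp_homog N)); last exact: (restr_Q Qnu).2.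
    by apply: (subspB (@subsp_homog N)); [exact: Qmu.1.2|exact: Hom1_homog].
  exists (D + `|k|) => n; rewrite !fE /h /restr.
  have := hnu (i n); rewrite /psi mu_s_i.
  have [? ?] := normB k.
  set F := f _; set V := nu _.
  rewrite !ler_norml => /andP[? ?]; apply/andP; split; lra.
have emu : mu = h + restr nu.
  apply/funext => n; have := d0 n; rewrite !fE => e; lra.
exists h, (restr nu); split; last by split; [exists nu|].
split => // g n n' e.
have hn : forall m, h m = mu m - nu (i m).
  by move=> m; have := d0 m; rewrite !fE /restr => e'; lra.
rewrite !hn (Qmu.2 g n n' e) e Q_conj //.
Qed.

Theorem main_eq : dimW i = (dim_im_dtau i p s + dim_second p)%E.
Proof.
rewrite /dimW (qdim_add dtau_lin subspQNG (@subspBb3 Gam) subspU U_A1).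
congr (_ + _)%E.
apply: (@qdim_rel _ _ Rel) => //.
- exact: Rel0.
- by move=> a x y x' y'; apply: RelC.
- exact: tot1.
- exact: tot2.
- by move=> a w hR; split; [exact: iff1|exact: iff2].
Qed.

Theorem main_le : (dimW i <= dim_ker_c3 Gam + dim_H2 G)%E.
Proof.
rewrite main_eq; apply: leeD.
  apply: qdim_mono => //; move=> _ [mu Qmu <-]; exact: dtau_Zb3.
apply: qdim_mono.
  move=> w [[a [c [[_ Za] [[f _ <-] ->]]]] _].
  rewrite /Z2 /mkset (linrD (@delta2_lin G)) delta21 addr0; exact: Za.
by move=> x Bx; apply: sumsetr => //; exact: (subsp_image (@pull2_lin _ _ p) (@subspZb2 Gam)).
Qed.
End Ext.

Local Open Scope ereal_scope.

Theorem theorem7p11 (N G Gam : groupType) (i : N -> G) (p : G -> Gam)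
  (s : Gam -> G) :
  short_exact i p ->
  (forall gam, p (s gam) = gam) -> s 1%g = 1%g ->
  dimW i = dim_im_dtau i p s + dim_second p /\
  dimW i <= dim_ker_c3 Gam + dim_H2 G.
Proof.
move=> hse ps s1; split; [exact: (main_eq hse ps s1)|exact: (main_le (s := s) hse ps s1)].
Qed.
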